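(* Let $(\mathfrak{g},[\cdot,\cdot]_{\mathfrak{g}})$ be a Leibniz algebra over a field $\mathbf{K}$, $(V;\rho^L,\rho^R)$ a representation, and $T:V\to\mathfrak{g}$ a relative Rota-Baxter operator. If $\mathcal{H}^2(V,\mathfrak{g})=0$, then every $\mathfrak{T}_1\in\mathcal{Z}^1(V,\mathfrak{g})$ is the infinitesimal of some formal deformation of $T$, i.e. there exist $\mathfrak{T}_i\in\mathrm{Hom}(V,\mathfrak{g})$, $i\ge2$, such that $T+\mathfrak{T}_1t+\sum_{i\ge2}\mathfrak{T}_it^i$ is a formal deformation of $T$.
   Context: A Leibniz algebra is a vector space $\mathfrak{g}$ with bilinear $[\cdot,\cdot]_{\mathfrak{g}}$ satisfying $[x,[y,z]_{\mathfrak{g}}]_{\mathfrak{g}}=[[x,y]_{\mathfrak{g}},z]_{\mathfrak{g}}+[y,[x,z]_{\mathfrak{g}}]_{\mathfrak{g}}$. A representation $(V;\rho^L,\rho^R)$: linear $\rho^L,\rho^R:\mathfrak{g}\to\mathfrak{gl}(V)$ with $\rho^L([x,y]_{\mathfrak{g}})=[\rho^L(x),\rho^L(y)]$, $\rho^R([x,y]_{\mathfrak{g}})=[\rho^L(x),\rho^R(y)]$, $\rho^R(y)\rho^L(x)=-\rho^R(y)\rho^R(x)$. A relative Rota-Baxter operator is a linear $T:V\to\mathfrak{g}$ with $[Tv_1,Tv_2]_{\mathfrak{g}}=T(\rho^L(Tv_1)v_2+\rho^R(Tv_2)v_1)$. Cohomology of $T$: $C^n(V,\mathfrak{g})=\mathrm{Hom}(\otimes^nV,\mathfrak{g})$,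 $C^0=\mathfrak{g}$, $\partial_T:C^n\to C^{n+1}$, $(\partial_Tf)(v_1,\dots,v_{n+1})=\sum_{i=1}^n(-1)^{i+1}[Tv_i,f(v_1,\dots,\hat v_i,\dots,v_{n+1})]_{\mathfrak{g}}-\sum_{i=1}^n(-1)^{i+1}T\rho^R(f(v_1,\dots,\hat v_i,\dots,v_{n+1}))v_i+(-1)^{n+1}[f(v_1,\dots,v_n),Tv_{n+1}]_{\mathfrak{g}}+(-1)^nT\rho^L(f(v_1,\dots,v_n))v_{n+1}+\sum_{1\le i<j\le n+1}(-1)^if(v_1,\dots,\hat v_i,\dots,v_{j-1},\rho^L(Tv_i)v_j+\rho^R(Tv_j)v_i,v_{j+1},\dots,v_{n+1})$; $\mathcal{Z}^k=\ker\partial_T\cap C^k$, $\mathcal{B}^k=\partial_T(C^{k-1})$, $\mathcal{H}^k=\mathcal{Z}^k/\mathcal{B}^k$. A formal deformation of $T$ is $T_t=\sum_{i\ge0}\mathfrak{T}_it^i$, $\mathfrak{T}_i\in\mathrm{Hom}(V,\mathfrak{g})$, $\mathfrak{T}_0=T$, extended $\mathbf{K}[[t]]$-linearly $V[[t]]\to\mathfrak{g}[[t]]$ (bracket and $\rho^L,\rho^R$ extended $\mathbf{K}[[t]]$-bilinearly), with $[T_t(u),T_t(v)]_{\mathfrak{g}}=T_t(\rho^L(T_t(u))v+\rho^R(T_t(v))u)$ for $u,v\in V$; its infinitesimal is $\mathfrak{T}_1$. *)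

(* Defs.v *)
From mathcomp Require Import all_boot all_order all_algebra.
Set Implicit Arguments. Unset Strict Implicit. Unset Printing Implicit Defensive.
Import GRing.Theory.
Local Open Scope ring_scope.

Section LeibnizDefs.
Variables (K : fieldType) (g V : lmodType K).

Definition leibniz_algebra (br : g -> g -> g) : Prop :=
  (forall x, linear (br x)) /\ (forall y, linear (fun x => br x y)) /\
  (forall x y z, br x (br y z) = br (br x y) z + br y (br x z)).

Definition leibniz_rep (br : g -> g -> g) (rhoL rhoR : g -> V -> V) : Prop :=
  (forall x, linear (rhoL x)) /\ (forall v, linear (fun x => rhoL x v)) /\
  (forall x, linear (rhoR x)) /\ (forall v, linear (fun x => rhoR x v)) /\
  (forall x y v, rhoL (br x y) v = rhoL x (rhoL y v) - rhoL y (rhoL x v)) /\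
  (forall x y v, rhoR (br x y) v = rhoL x (rhoR y v) - rhoR y (rhoL x v)) /\
  (forall x y v, rhoR y (rhoL x v) = - rhoR y (rhoR x v)).

Definition relative_RB (br : g -> g -> g) (rhoL rhoR : g -> V -> V)
  (T : V -> g) : Prop :=
  linear T /\
  forall v1 v2, br (T v1) (T v2) = T (rhoL (T v1) v2 + rhoR (T v2) v1).

(** n-cochains: C^n(V,g) = Hom(⊗^n V, g), represented as maps f : seq V -> g
    that are multilinear on lists of length n (values on lists of other
    lengths are irrelevant). *)
Definition multilinear (n : nat) (f : seq V -> g) : Prop :=
  forall (s : seq V) (i : nat), size s = n -> (i < n)%N ->
    linear (fun x => f (set_nth 0 s i x)).

Definition drop_at (i : nat) (s : seq V) : seq V := take i s ++ drop i.+1 s.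

(** The coboundary ∂_T : C^n -> C^{n+1}, evaluated on a list s = [v_1;...;v_{n+1}]
    (0-based indices i' = i - 1, j' = j - 1). *)
Definition dT (br : g -> g -> g) (rhoL rhoR : g -> V -> V) (T : V -> g)
  (n : nat) (f : seq V -> g) (s : seq V) : g :=
  \sum_(i < n) ((-1) ^+ i *: br (T (nth 0 s i)) (f (drop_at i s)))
  - \sum_(i < n) ((-1) ^+ i *: T (rhoR (f (drop_at i s)) (nth 0 s i)))
  + (-1) ^+ n.+1 *: br (f (take n s)) (T (nth 0 s n))
  + (-1) ^+ n *: T (rhoL (f (take n s)) (nth 0 s n))
  + \sum_(j < n.+1) \sum_(i < j)
      ((-1) ^+ i.+1 *:
        f (drop_at i (set_nth 0 s j
             (rhoL (T (nth 0 s i)) (nth 0 s j) + rhoR (T (nth 0 s j)) (nth 0 s i))))).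

Definition cocycle br rhoL rhoR T (n : nat) (f : seq V -> g) : Prop :=
  multilinear n f /\
  forall s : seq V, size s = n.+1 -> dT br rhoL rhoR T n f s = 0.

Definition coboundary br rhoL rhoR T (n : nat) (f : seq V -> g) : Prop :=
  exists h : seq V -> g, multilinear n.-1 h /\
    forall s : seq V, size s = n -> f s = dT br rhoL rhoR T n.-1 h s.

Definition H2_vanishes br rhoL rhoR T : Prop :=
  forall f : seq V -> g, cocycle br rhoL rhoR T 2 f -> coboundary br rhoL rhoR T 2 f.

Definition cochain1 (T1 : V -> g) : seq V -> g := fun s => T1 (nth 0 s 0).

(** T_t = sum_i Ts i t^i is a formal deformation of T: each Ts i linear,
    Ts 0 = T, and the RB identity holds in g[[t]], i.e. coefficientwise:
    coefficient of t^n of [T_t u, T_t v] equals that of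
    T_t(rhoL(T_t u) v + rhoR(T_t v) u). *)
Definition formal_deformation br rhoL rhoR (T : V -> g) (Ts : nat -> V -> g) : Prop :=
  (forall i, linear (Ts i)) /\ Ts 0%N = T /\
  forall (n : nat) (u v : V),
    \sum_(i < n.+1) br (Ts i u) (Ts (n - i)%N v) =
    \sum_(i < n.+1) Ts i (\sum_(j < n.+1 | (i + j == n)%N)
                            (rhoL (Ts j u) v + rhoR (Ts j v) u)).

End LeibnizDefs.

(* Main.v *)
Require Import Defs.
From mathcomp Require Import all_boot all_order all_algebra zify.
From Stdlib Require Import ClassicalEpsilon.
Import GRing.Theory.
Set Implicit Arguments. Unset Strict Implicit.
Local Open Scope ring_scope.

Inductive zexp := ZA of nat | ZP of zexp & zexp | ZN of zexp | Z0.

Section ZEval.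
Variable M : zmodType.
Fixpoint zeval (env : seq M) (e : zexp) : M :=
  match e with
  | ZA i => nth 0 env i
  | ZP a b => zeval env a + zeval env b
  | ZN a => - zeval env a
  | Z0 => 0
  end.
End ZEval.

Fixpoint zcoef (e : zexp) (i : nat) : int :=
  match e with
  | ZA j => Posz (i == j)
  | ZP a b => zcoef a i + zcoef b i
  | ZN a => - zcoef a i
  | Z0 => 0
  end.

Fixpoint zmax (e : zexp) : nat :=
  match e with
  | ZA j => j.+1
  | ZP a b => maxn (zmax a) (zmax b)
  | ZN a => zmax a
  | Z0 => 0
  end.

Lemma zeval_sum (M : zmodType) (env : seq M) e K : (zmax e <= K)%N ->
  zeval env e = \sum_(i < K) (nth 0 env i) *~ zcoef e i.
Proof.
elim: e => [j|a iha b ihb|a iha|] /= hK.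
- rewrite (bigD1 (Ordinal hK)) //= eqxx mulr1z big1 ?addr0 // => i hi.
  have -> : (i == j :> nat) = false.
    by apply/negP => /eqP e; move: hi; rewrite -val_eqE /= e eqxx.
  by rewrite mulr0z.
- rewrite geq_max in hK; case/andP: hK => ha hb.
  rewrite iha // ihb // -big_split /=; apply: eq_bigr => i _.
  by rewrite mulrzDr.
- rewrite iha // -sumrN; apply: eq_bigr => i _; by rewrite mulrNz.
- by rewrite big1 // => i _; rewrite mulr0z.
Qed.

Definition zcheck (e1 e2 : zexp) : bool :=
  all (fun i => zcoef e1 i == zcoef e2 i) (iota 0 (maxn (zmax e1) (zmax e2))).

Lemma zcheck_eq (M : zmodType) (env : seq M) e1 e2 :
  zcheck e1 e2 -> zeval env e1 = zeval env e2.
Proof.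
move=> /allP h.
rewrite (@zeval_sum _ _ e1 (maxn (zmax e1) (zmax e2))) ?leq_maxl //.
rewrite (@zeval_sum _ _ e2 (maxn (zmax e1) (zmax e2))) ?leq_maxr //.
apply: eq_bigr => i _; congr (_ *~ _); apply/eqP; apply: h.
by rewrite mem_iota /= add0n.
Qed.

Ltac zlookup x env :=
  lazymatch env with
  | cons ?y ?rest =>
      match constr:(Set) with
      | _ => let _ := match goal with _ => unify x y end in constr:(O)
      | _ => let n := zlookup x rest in constr:(S n)
      end
  end.

Ltac zcollect t acc :=
  lazymatch t with
  | @GRing.add _ ?a ?b => let acc' := zcollect a acc in zcollect b acc'
  | @GRing.opp _ ?a => zcollect a acc
  | @GRing.zero _ => acc
  | _ => match constr:(Set) with
         | _ => let _ := zlookup t acc in acc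
         | _ => constr:(cons t acc)
         end
  end.

Ltac zreify t env :=
  lazymatch t with
  | @GRing.add _ ?a ?b => let ea := zreify a env in let eb := zreify b env in constr:(ZP ea eb)
  | @GRing.opp _ ?a => let ea := zreify a env in constr:(ZN ea)
  | @GRing.zero _ => constr:(Z0)
  | _ => let n := zlookup t env in constr:(ZA n)
  end.

Ltac zabel :=
  lazymatch goal with
  | |- @eq ?M ?l ?r =>
      let env0 := constr:(@nil M) in
      let env1 := zcollect l env0 in
      let env := zcollect r env1 in
      let e1 := zreify l env in
      let e2 := zreify r env in
      change (zeval env e1 = zeval env e2);
      apply: zcheck_eq; vm_compute; reflexivity
  end.

Goal forall (M : zmodType) (a b c : M), a + (b - c) - (- c + a) = b + 0.
Proof. move=> M a b c. zabel. Qed.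

Definition S3 (M : zmodType) (n : nat) (F : nat -> nat -> nat -> M) : M :=
  \sum_(a < n.+1) \sum_(b < n.+1) \sum_(c < n.+1)
     (if (a + b + c == n)%N then F a b c else 0).

Lemma S3_ext (M : zmodType) n (F G : nat -> nat -> nat -> M) :
  (forall a b c, F a b c = G a b c) -> S3 n F = S3 n G.
Proof.
move=> h; apply: eq_bigr => a _; apply: eq_bigr => b _; apply: eq_bigr => c _.
by rewrite h.
Qed.

Lemma S3_swap12 (M : zmodType) n (F : nat -> nat -> nat -> M) :
  S3 n F = S3 n (fun a b c => F b a c).
Proof.
rewrite /S3 exchange_big; apply: eq_bigr => a _; apply: eq_bigr => b _.
by apply: eq_bigr => c _; rewrite (addnC b a).
Qed.

Lemma S3_swap23 (M : zmodType) n (F : nat -> nat -> nat -> M) :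
  S3 n F = S3 n (fun a b c => F a c b).
Proof.
rewrite /S3; apply: eq_bigr => a _; rewrite exchange_big.
apply: eq_bigr => b _; apply: eq_bigr => c _.
by rewrite -!addnA (addnC b c).
Qed.

Lemma S3_add (M : zmodType) n (F G : nat -> nat -> nat -> M) :
  S3 n (fun a b c => F a b c + G a b c) = S3 n F + S3 n G.
Proof.
rewrite /S3 -big_split; apply: eq_bigr => a _; rewrite -big_split.
apply: eq_bigr => b _; rewrite -big_split; apply: eq_bigr => c _.
by case: (_ == n); rewrite /= ?addr0.
Qed.

Lemma S3_0 (M : zmodType) n : S3 n (fun _ _ _ => (0 : M)) = 0.
Proof.
rewrite /S3 big1 // => a _; rewrite big1 // => b _; rewrite big1 // => c _.
by case: (_ == n).
Qed.

Lemma sum_pick (M : zmodType) (N k : nat) (G : nat -> M) (P : nat -> bool) :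
  (k < N)%N -> (forall c, P c = (c == k)) ->
  \sum_(c < N) (if P c then G c else 0) = G k.
Proof.
move=> hk hP; rewrite -big_mkcond /= (eq_bigl (fun c : 'I_N => (c : nat) == k)).
  by rewrite big_ord1_eq hk.
by move=> c; rewrite hP.
Qed.

Lemma sum_tri (M : zmodType) n (F : nat -> nat -> nat -> M) :
  \sum_(a < n.+1) \sum_(i < (n - a)%N.+1) F a i (n - a - i)%N = S3 n F.
Proof.
rewrite /S3; apply: eq_bigr => a _.
have ha : (a <= n)%N by rewrite -ltnS.
transitivity (\sum_(b < n.+1) (if (b <= n - a)%N then F a b (n - a - b)%N else 0)).
  rewrite -big_mkcond /= (@big_ord_widen _ 0 +%R _ n.+1 (fun i : nat => F a i (n - a - i)%N)) //.
  lia.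
apply: eq_bigr => b _.
case: ifP => hb.
  rewrite (@sum_pick _ n.+1 (n - a - b)%N (fun c => F a b c) (fun c => (a + b + c == n)%N)) //.
    lia.
  move=> c; apply/eqP/eqP; lia.
rewrite big1 // => c _; case: eqP => // e; exfalso; move/negbT: hb; lia.
Qed.

Lemma addf_0 (A B : zmodType) (h : A -> B) :
  (forall x y, h (x + y) = h x + h y) -> h 0 = 0.
Proof.
move=> hD; have := hD 0 0; rewrite addr0 => e.
by apply: (addrI (h 0)); rewrite addr0 -e.
Qed.

Lemma addf_N (A B : zmodType) (h : A -> B) :
  (forall x y, h (x + y) = h x + h y) -> forall x, h (- x) = - h x.
Proof.
move=> hD x; apply/eqP; rewrite -subr_eq0 opprK -hD addrC subrr.
by rewrite (addf_0 hD).
Qed.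

Section Generic.
Variables (G W : zmodType) (br : G -> G -> G) (rL rR : G -> W -> W).
Hypotheses (brDl : forall x y z, br (x + y) z = br x z + br y z)
  (brDr : forall x y z, br x (y + z) = br x y + br x z)
  (rLDl : forall x y v, rL (x + y) v = rL x v + rL y v)
  (rLDr : forall x u v, rL x (u + v) = rL x u + rL x v)
  (rRDl : forall x y v, rR (x + y) v = rR x v + rR y v)
  (rRDr : forall x u v, rR x (u + v) = rR x u + rR x v)
  (leib : forall x y z, br x (br y z) = br (br x y) z + br y (br x z))
  (repL : forall x y v, rL (br x y) v = rL x (rL y v) - rL y (rL x v))
  (repR : forall x y v, rR (br x y) v = rL x (rR y v) - rR y (rL x v))
  (repLR : forall x y v, rR y (rL x v) = - rR y (rR x v)).

Lemma brNl x z : br (- x) z = - br x z.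
Proof. exact: (addf_N (fun x => brDl x ^~ z)). Qed.
Lemma brNr x z : br x (- z) = - br x z.
Proof. exact: (addf_N (brDr x)). Qed.
Lemma br0l z : br 0 z = 0.
Proof. exact: (addf_0 (fun x => brDl x ^~ z)). Qed.
Lemma br0r x : br x 0 = 0.
Proof. exact: (addf_0 (brDr x)). Qed.
Lemma rLNl x v : rL (- x) v = - rL x v.
Proof. exact: (addf_N (fun x => rLDl x ^~ v)). Qed.
Lemma rLNr x v : rL x (- v) = - rL x v.
Proof. exact: (addf_N (rLDr x)). Qed.
Lemma rL0l v : rL 0 v = 0.
Proof. exact: (addf_0 (fun x => rLDl x ^~ v)). Qed.
Lemma rL0r x : rL x 0 = 0.
Proof. exact: (addf_0 (rLDr x)). Qed.
Lemma rRNl x v : rR (- x) v = - rR x v.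
Proof. exact: (addf_N (fun x => rRDl x ^~ v)). Qed.
Lemma rRNr x v : rR x (- v) = - rR x v.
Proof. exact: (addf_N (rRDr x)). Qed.
Lemma rR0l v : rR 0 v = 0.
Proof. exact: (addf_0 (fun x => rRDl x ^~ v)). Qed.
Lemma rR0r x : rR x 0 = 0.
Proof. exact: (addf_0 (rRDr x)). Qed.

Definition circ (P : W -> G) (u v : W) : W := rL (P u) v + rR (P v) u.
Definition Eb (P Q : W -> G) (u v : W) : G := br (P u) (Q v) - P (circ Q u v).
Definition Dd (P : W -> G) (om : W -> W -> G) (v1 v2 v3 : W) : G :=
  br (P v1) (om v2 v3) - br (P v2) (om v1 v3)
  - P (rR (om v2 v3) v1) + P (rR (om v1 v3) v2)
  - br (om v1 v2) (P v3) + P (rL (om v1 v2) v3)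
  - om (circ P v1 v2) v3 - om v2 (circ P v1 v3) + om v1 (circ P v2 v3).

Variable f : nat -> W -> G.
Hypothesis fD : forall a u v, f a (u + v) = f a u + f a v.
Lemma fN a u : f a (- u) = - f a u.
Proof. exact: (addf_N (fD a)). Qed.
Lemma f0 a : f a 0 = 0.
Proof. exact: (addf_0 (fD a)). Qed.

Variables v1 v2 v3 : W.

Definition P0 a b c :=
 br (f a v1) (br (f b v2) (f c v3))
 - br (f a v1) (f b (rL (f c v2) v3))
 - br (f a v1) (f b (rR (f c v3) v2))
 + br (f a v2) (f b (rL (f c v1) v3))
 + br (f a v2) (f b (rR (f c v3) v1))
 + br (f b (rL (f c v1) v2)) (f a v3)
 + br (f b (rR (f c v2) v1)) (f a v3)
 - f a (rL (f b v2) (rR (f c v3) v1))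
 + f a (rR (f c v3) (rL (f b v2) v1))
 + f a (rR (f b (rL (f c v2) v3)) v1)
 + f a (rR (f b (rR (f c v3) v2)) v1)
 + f a (rL (f b v1) (rR (f c v3) v2))
 - f a (rR (f c v3) (rL (f b v1) v2))
 - f a (rR (f b (rL (f c v1) v3)) v2)
 - f a (rR (f b (rR (f c v3) v1)) v2)
 + f a (rL (f b v1) (rL (f c v2) v3))
 - f a (rL (f c v2) (rL (f b v1) v3))
 - f a (rL (f b (rL (f c v1) v2)) v3)
 - f a (rL (f b (rR (f c v2) v1)) v3).
Definition P1 a b c :=
 - br (f a v2) (br (f b v1) (f c v3))
 + f b (rR (f c v3) (rL (f a v1) v2))
 + f b (rR (f c v3) (rR (f a v2) v1))
 + f b (rL (f c v2) (rL (f a v1) v3)).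
Definition P2 a b c :=
 - br (br (f b v1) (f c v2)) (f a v3)
 + f b (rL (f c (rL (f a v1) v2)) v3)
 + f b (rL (f c (rR (f a v2) v1)) v3)
 - br (f b v2) (f c (rL (f a v1) v3))
 - br (f b v2) (f c (rR (f a v3) v1))
 + f b (rL (f c v2) (rR (f a v3) v1))
 + f b (rR (f c (rL (f a v1) v3)) v2)
 + f b (rR (f c (rR (f a v3) v1)) v2)
 + br (f b v1) (f c (rL (f a v2) v3))
 + br (f b v1) (f c (rR (f a v3) v2))
 - f b (rL (f c v1) (rL (f a v2) v3))
 - f b (rL (f c v1) (rR (f a v3) v2))
 - f b (rR (f c (rL (f a v2) v3)) v1)
 - f b (rR (f c (rR (f a v3) v2)) v1).
Definition P3 a b c :=
 - br (f b (rL (f a v1) v2)) (f c v3)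
 - br (f b (rR (f a v2) v1)) (f c v3).

Ltac lin := rewrite ?(brDl, brDr, rLDl, rLDr, rRDl, rRDr, fD, brNl, brNr,
   rLNl, rLNr, rRNl, rRNr, fN, opprK, opprD).

Lemma W_expand a b c :
  Dd (f a) (Eb (f b) (f c)) v1 v2 v3 = P0 a b c + P1 a b c + P2 a b c + P3 a b c.
Proof.
rewrite /Dd /Eb /circ /P0 /P1 /P2 /P3.
lin. rewrite !repR !repL. lin.
zabel.
Qed.

Lemma W_cancel a b c : P0 a b c + P1 b a c + P2 c a b + P3 c b a = 0.
Proof.
rewrite /P0 /P1 /P2 /P3.
rewrite (leib (f a v1) (f b v2) (f c v3)).
rewrite (repLR (f b v2) (f c v3) v1).
lin. zabel.
Qed.


Lemma S3_W n : S3 n (fun a b c => Dd (f a) (Eb (f b) (f c)) v1 v2 v3) = 0.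
Proof.
rewrite (S3_ext n (fun a b c => W_expand a b c)).
rewrite (S3_add n (fun a b c => P0 a b c + P1 a b c + P2 a b c) P3).
rewrite (S3_add n (fun a b c => P0 a b c + P1 a b c) P2).
rewrite (S3_add n P0 P1).
rewrite (S3_swap12 n P1) (S3_swap12 n P2) (S3_swap23 n (fun a b c => P2 b a c)).
rewrite (S3_swap12 n P3) (S3_swap23 n (fun a b c => P3 b a c)).
rewrite (S3_swap12 n (fun a b c => P3 c a b)).
rewrite -S3_add -S3_add -S3_add.
rewrite (S3_ext n (fun a b c => W_cancel a b c)).
exact: S3_0.
Qed.

Lemma Dd_ext P om1 om2 : (forall u v, om1 u v = om2 u v) ->
  Dd P om1 v1 v2 v3 = Dd P om2 v1 v2 v3.
Proof. by move=> h; rewrite /Dd !h. Qed.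

Lemma Dd_add P (PD : forall u v, P (u + v) = P u + P v) om1 om2 :
  Dd P (fun u v => om1 u v + om2 u v) v1 v2 v3 =
  Dd P om1 v1 v2 v3 + Dd P om2 v1 v2 v3.
Proof.
rewrite /Dd /=. rewrite ?(brDl, brDr, rRDl, rLDl, PD). zabel.
Qed.

Lemma Dd_zero P (PD : forall u v, P (u + v) = P u + P v) om :
  (forall u v, om u v = 0) -> Dd P om v1 v2 v3 = 0.
Proof.
move=> h; rewrite /Dd !h !br0r !br0l !rR0l !rL0l (addf_0 PD). zabel.
Qed.

Lemma Dd_sum P (PD : forall u v, P (u + v) = P u + P v) m
   (F : nat -> W -> W -> G) :
  Dd P (fun u v => \sum_(i < m) F i u v) v1 v2 v3 =
  \sum_(i < m) Dd P (F i) v1 v2 v3.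
Proof.
elim: m => [|m ih].
  rewrite big_ord0; apply: Dd_zero => // u v; by rewrite big_ord0.
rewrite big_ord_recr /= -ih -Dd_add //; apply: Dd_ext => u v.
by rewrite big_ord_recr.
Qed.

Definition Ob k u v := \sum_(i < k.+1) Eb (f i) (f (k - i)%N) u v.

Theorem gen_cocycle n : (forall k, (k < n)%N -> forall u v, Ob k u v = 0) ->
  Dd (f 0) (Ob n) v1 v2 v3 = 0.
Proof.
move=> hk.
have h: \sum_(a < n.+1) Dd (f a) (Ob (n - a)%N) v1 v2 v3 = 0.
  apply: (etrans _ (S3_W n)); rewrite -sum_tri; apply: eq_bigr => a _.
  transitivity (Dd (f a) (fun u v => \sum_(i < (n - a)%N.+1)
     Eb (f i) (f (n - a - i)%N) u v) v1 v2 v3); first by [].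
  by rewrite (Dd_sum (fD a) (n - a)%N.+1 (fun i u v => Eb (f i) (f (n - a - i)%N) u v)).
rewrite big_ord_recl in h.
rewrite big1 in h.
  by rewrite addr0 subn0 in h.
move=> i _; apply: Dd_zero => // u v; apply: hk.
by case: i => i hi /=; rewrite /bump /=; lia.
Qed.

End Generic.

Section Main.
Variables (K : fieldType) (g V : lmodType K).
Variables (br : g -> g -> g) (rhoL rhoR : g -> V -> V) (T : V -> g).

Lemma sgn_scale (M : lmodType K) (x : M) k :
  (-1) ^+ k *: x = if odd k then - x else x.
Proof.
rewrite -signr_odd; case: (odd k); by rewrite ?expr1 ?expr0 ?scaleN1r ?scale1r.
Qed.

Lemma dT1_eq (TD : forall x y, T (x + y) = T x + T y) (h : seq V -> g) u v :
  dT br rhoL rhoR T 1 h [:: u; v] =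
  Eb br rhoL rhoR T (fun x => h [:: x]) u v + Eb br rhoL rhoR (fun x => h [:: x]) T u v.
Proof.
rewrite /dT !big_ord_recr !big_ord0 /= !sgn_scale /= /drop_at /=.
rewrite /Eb /circ /= TD. zabel.
Qed.

Lemma dT2_eq (om : V -> V -> g) v1 v2 v3 :
  dT br rhoL rhoR T 2 (fun s => om (nth 0 s 0) (nth 0 s 1)) [:: v1; v2; v3] =
  Dd br rhoL rhoR T om v1 v2 v3.
Proof.
rewrite /dT !big_ord_recr !big_ord0 /= !sgn_scale /= /drop_at /=.
rewrite /Dd /circ /=. zabel.
Qed.

Lemma lin_add (A B : lmodType K) (h : A -> B) :
  linear h -> forall x y, h (x + y) = h x + h y.
Proof. by move=> hl x y; have := hl 1 x y; rewrite !scale1r. Qed.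

Lemma lin_scale (A B : lmodType K) (h : A -> B) :
  linear h -> forall a x, h (a *: x) = a *: h x.
Proof.
move=> hl a x; have := hl a x 0; rewrite addr0 => ->.
by rewrite (addf_0 (lin_add hl)) addr0.
Qed.

Lemma lin_opp (A B : lmodType K) (h : A -> B) :
  linear h -> forall x, h (- x) = - h x.
Proof. move=> hl; exact: (addf_N (lin_add hl)). Qed.

Lemma lin_sum (A B : lmodType K) m (F : nat -> A -> B) :
  (forall i, linear (F i)) -> linear (fun x => \sum_(i < m) F i x).
Proof.
move=> hF a x y /=; rewrite scaler_sumr -big_split; apply: eq_bigr => i _.
exact: hF.
Qed.

Hypotheses (Hla : leibniz_algebra br) (Hrep : leibniz_rep br rhoL rhoR)
  (HRB : relative_RB br rhoL rhoR T) (H2 : H2_vanishes br rhoL rhoR T).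
Variable T1 : V -> g.
Hypotheses (HT1 : linear T1) (Hc : cocycle br rhoL rhoR T 1 (cochain1 T1)).

Lemma brDl x y z : br (x + y) z = br x z + br y z.
Proof. case: Hla => _ [h _]; exact: (lin_add (h z)). Qed.
Lemma brDr x y z : br x (y + z) = br x y + br x z.
Proof. case: Hla => h _; exact: (lin_add (h x)). Qed.
Lemma brZl a x z : br (a *: x) z = a *: br x z.
Proof. case: Hla => _ [h _]; exact: (lin_scale (h z)). Qed.
Lemma brZr a x z : br x (a *: z) = a *: br x z.
Proof. case: Hla => h _; exact: (lin_scale (h x)). Qed.
Lemma leibH x y z : br x (br y z) = br (br x y) z + br y (br x z).
Proof. by case: Hla => _ [_ h]. Qed.
Lemma rLDl x y v : rhoL (x + y) v = rhoL x v + rhoL y v.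
Proof. case: Hrep => _ [h _]; exact: (lin_add (h v)). Qed.
Lemma rLDr x u v : rhoL x (u + v) = rhoL x u + rhoL x v.
Proof. case: Hrep => h _; exact: (lin_add (h x)). Qed.
Lemma rLZl a x v : rhoL (a *: x) v = a *: rhoL x v.
Proof. case: Hrep => _ [h _]; exact: (lin_scale (h v)). Qed.
Lemma rLZr a x v : rhoL x (a *: v) = a *: rhoL x v.
Proof. case: Hrep => h _; exact: (lin_scale (h x)). Qed.
Lemma rRDl x y v : rhoR (x + y) v = rhoR x v + rhoR y v.
Proof. case: Hrep => _ [_ [_ [h _]]]; exact: (lin_add (h v)). Qed.
Lemma rRDr x u v : rhoR x (u + v) = rhoR x u + rhoR x v.
Proof. case: Hrep => _ [_ [h _]]; exact: (lin_add (h x)). Qed.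
Lemma rRZl a x v : rhoR (a *: x) v = a *: rhoR x v.
Proof. case: Hrep => _ [_ [_ [h _]]]; exact: (lin_scale (h v)). Qed.
Lemma rRZr a x v : rhoR x (a *: v) = a *: rhoR x v.
Proof. case: Hrep => _ [_ [h _]]; exact: (lin_scale (h x)). Qed.
Lemma repLH x y v : rhoL (br x y) v = rhoL x (rhoL y v) - rhoL y (rhoL x v).
Proof. by case: Hrep => _ [_ [_ [_ [h _]]]]. Qed.
Lemma repRH x y v : rhoR (br x y) v = rhoL x (rhoR y v) - rhoR y (rhoL x v).
Proof. by case: Hrep => _ [_ [_ [_ [_ [h _]]]]]. Qed.
Lemma repLRH x y v : rhoR y (rhoL x v) = - rhoR y (rhoR x v).
Proof. by case: Hrep => _ [_ [_ [_ [_ [_ h]]]]]. Qed.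
Lemma Tlin : linear T.
Proof. by case: HRB. Qed.
Lemma TD x y : T (x + y) = T x + T y.
Proof. exact: (lin_add Tlin). Qed.

Lemma brNl' x z : br (- x) z = - br x z.
Proof. exact: (addf_N (fun x => brDl x ^~ z)). Qed.
Lemma brNr' x z : br x (- z) = - br x z.
Proof. exact: (addf_N (brDr x)). Qed.
Lemma br0l' z : br 0 z = 0.
Proof. exact: (addf_0 (fun x => brDl x ^~ z)). Qed.
Lemma br0r' x : br x 0 = 0.
Proof. exact: (addf_0 (brDr x)). Qed.
Lemma rLNl' x v : rhoL (- x) v = - rhoL x v.
Proof. exact: (addf_N (fun x => rLDl x ^~ v)). Qed.
Lemma rLNr' x v : rhoL x (- v) = - rhoL x v.
Proof. exact: (addf_N (rLDr x)). Qed.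
Lemma rL0l' v : rhoL 0 v = 0.
Proof. exact: (addf_0 (fun x => rLDl x ^~ v)). Qed.
Lemma rRNl' x v : rhoR (- x) v = - rhoR x v.
Proof. exact: (addf_N (fun x => rRDl x ^~ v)). Qed.
Lemma rRNr' x v : rhoR x (- v) = - rhoR x v.
Proof. exact: (addf_N (rRDr x)). Qed.
Lemma rR0l' v : rhoR 0 v = 0.
Proof. exact: (addf_0 (fun x => rRDl x ^~ v)). Qed.

Lemma Eb_lin1 (P Q : V -> g) : linear P -> linear Q ->
  forall v, linear (fun u => Eb br rhoL rhoR P Q u v).
Proof.
move=> hP hQ v a x y /=; rewrite /Eb /circ.
rewrite ?(lin_add hP, lin_add hQ, lin_scale hP, lin_scale hQ, lin_opp hP, lin_opp hQ,
  brDl, brDr, brZl, brZr, brNl', brNr', rLDl, rLDr, rLZl, rLZr, rRDl, rRDr, rRZl, rRZr,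
  rLNl', rLNr', rRNl', rRNr', scalerDr, scalerN, opprD, opprK).
zabel.
Qed.

Lemma Eb_lin2 (P Q : V -> g) : linear P -> linear Q ->
  forall u, linear (fun v => Eb br rhoL rhoR P Q u v).
Proof.
move=> hP hQ u a x y /=; rewrite /Eb /circ.
rewrite ?(lin_add hP, lin_add hQ, lin_scale hP, lin_scale hQ, lin_opp hP, lin_opp hQ,
  brDl, brDr, brZl, brZr, brNl', brNr', rLDl, rLDr, rLZl, rLZr, rRDl, rRDr, rRZl, rRZr,
  rLNl', rLNr', rRNl', rRNr', scalerDr, scalerN, opprD, opprK).
zabel.
Qed.

Lemma Ob_lin1 (f : nat -> V -> g) k : (forall i, linear (f i)) ->
  forall v, linear (fun u => Ob br rhoL rhoR f k u v).
Proof.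
move=> hf v; rewrite /Ob.
apply: (@lin_sum _ _ k.+1 (fun i u => Eb br rhoL rhoR (f i) (f (k - i)%N) u v)) => i.
exact: Eb_lin1.
Qed.

Lemma Ob_lin2 (f : nat -> V -> g) k : (forall i, linear (f i)) ->
  forall u, linear (fun v => Ob br rhoL rhoR f k u v).
Proof.
move=> hf u; rewrite /Ob.
apply: (@lin_sum _ _ k.+1 (fun i v => Eb br rhoL rhoR (f i) (f (k - i)%N) u v)) => i.
exact: Eb_lin2.
Qed.

Lemma Ob_ext (f f' : nat -> V -> g) k : (forall i, (i <= k)%N -> f i = f' i) ->
  forall u v, Ob br rhoL rhoR f k u v = Ob br rhoL rhoR f' k u v.
Proof.
move=> h u v; apply: eq_bigr => i _.
have hi : (i <= k)%N by rewrite -ltnS.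
by rewrite !h // leq_subr.
Qed.

Lemma Ob_peel (f : nat -> V -> g) m u v :
  Ob br rhoL rhoR f m.+2 u v =
  Eb br rhoL rhoR (f 0%N) (f m.+2) u v
  + \sum_(i < m.+1) Eb br rhoL rhoR (f i.+1) (f (m.+1 - i)%N) u v
  + Eb br rhoL rhoR (f m.+2) (f 0%N) u v.
Proof.
rewrite /Ob big_ord_recl big_ord_recr /= subn0 subnn addrA /bump /=.
by rewrite !add1n.
Qed.

Definition upd (f : nat -> V -> g) (n : nat) (h : V -> g) : nat -> V -> g :=
  fun i => if i == n then h else f i.

Definition Inv (m : nat) (f : nat -> V -> g) : Prop :=
  [/\ forall i, linear (f i), f 0%N = T, f 1%N = T1,
      forall i, (m.+1 < i)%N -> f i = (fun _ => 0) &
      forall k, (k <= m.+1)%N -> forall u v, Ob br rhoL rhoR f k u v = 0].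

Lemma step m f : Inv m f ->
  exists h : V -> g, (linear h) /\
    forall u v, Ob br rhoL rhoR (upd f m.+2 h) m.+2 u v = 0.
Proof.
case=> flin f0 f1 fz fob.
have fD : forall a u v, f a (u + v) = f a u + f a v by move=> a; exact: lin_add.
pose c := fun s : seq V => Ob br rhoL rhoR f m.+2 (nth 0 s 0) (nth 0 s 1).
have cc : cocycle br rhoL rhoR T 2 c.
  split.
    move=> s i; case: s => [|s0 [|s1 [|? ?]]] // _; case: i => [|[|i]] // _.
      exact: (@Ob_lin1 f m.+2 flin s1).
    exact: (@Ob_lin2 f m.+2 flin s0).
  move=> s; case: s => [|v1 [|v2 [|v3 [|? ?]]]] // _.
  rewrite dT2_eq -f0.
  apply: gen_cocycle; [exact: brDl | exact: brDr | exact: rLDl | exact: rLDr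
    | exact: rRDl | exact: rRDr | exact: leibH | exact: repLH | exact: repRH
    | exact: repLRH | exact: fD | ].
  by move=> k hk; apply: fob; rewrite -ltnS.
have [h0 [hml hcob]] := H2 cc.
pose hh := fun x : V => h0 [:: x].
have hhlin : linear hh by exact: (hml [:: 0] 0%N erefl erefl).
exists (fun x => - hh x); split.
  by move=> a x y /=; rewrite hhlin scalerN opprD.
move=> u v.
have e1 : Ob br rhoL rhoR f m.+2 u v =
    Eb br rhoL rhoR T hh u v + Eb br rhoL rhoR hh T u v.
  by rewrite -(dT1_eq TD); exact: (hcob [:: u; v] erefl).
have T0 : T 0 = 0 by exact: (addf_0 TD).
rewrite Ob_peel (fz m.+2 (ltnSn _)) f0 in e1.
rewrite Ob_peel /upd /= eqxx.
rewrite (eq_bigr (fun i : 'I_m.+1 => Eb br rhoL rhoR (f i.+1) (f (m.+1 - i)%N) u v)); last first.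
  by move=> i _; rewrite !ifN //; apply/eqP; have := ltn_ord i; lia.
rewrite f0.
set Mid := \sum_(i < m.+1) _ in e1 *.
rewrite /Eb /circ /= in e1 *.
rewrite ?br0r' ?br0l' ?rL0l' ?rR0l' ?addr0 ?T0 ?subrr ?add0r ?addr0 in e1.
rewrite e1.
rewrite ?(TD, brNr', brNl', rLNl', rRNl', lin_opp Tlin, opprD, opprK).
zabel.
Qed.


Definition next (f : nat -> V -> g) (n : nat) : V -> g :=
  epsilon (inhabits (fun _ : V => (0 : g)))
    (fun h => (linear h) /\ forall u v, Ob br rhoL rhoR (upd f n h) n u v = 0).

Fixpoint Fam (m : nat) : nat -> V -> g :=
  match m with
  | 0 => fun i => if i == 0%N then T else if i == 1%N then T1 else (fun _ => 0)
  | m'.+1 => upd (Fam m') m'.+2 (next (Fam m') m'.+2)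
  end.

Lemma Inv0 : Inv 0 (Fam 0).
Proof.
split.
- move=> [|[|i]] /=; [exact: Tlin | exact: HT1 |].
  by move=> a x y; rewrite scaler0 addr0.
- by [].
- by [].
- by move=> [|[|i]].
- move=> k hk u v; case: k hk => [|[|k]] // _.
    rewrite /Ob big_ord_recl big_ord0 addr0 /Eb /circ /=.
    by case: HRB => _ h; rewrite h subrr.
  have := (proj2 Hc) [:: u; v] erefl; rewrite (dT1_eq TD) => <-.
  by rewrite /Ob big_ord_recr big_ord_recl big_ord0 /= addr0.
Qed.

Lemma InvS m : Inv m (Fam m) -> Inv m.+1 (Fam m.+1).
Proof.
move=> hI.
have sp := epsilon_spec (inhabits (fun _ : V => (0 : g)))
   (fun h => (linear h) /\ forall u v, Ob br rhoL rhoR (upd (Fam m) m.+2 h) m.+2 u v = 0)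
   (step hI).
case: hI => flin f0 f1 fz fob; case: sp => hl hob.
split.
- by move=> i; rewrite /= /upd; case: (i == m.+2).
- by rewrite /= /upd.
- by rewrite /= /upd.
- move=> i hi; rewrite /= /upd ifN; first by apply: fz; lia.
  by apply/eqP; lia.
- move=> k hk u v.
  have [ek|nk] := eqVneq k m.+2.
    by rewrite ek; exact: hob.
  rewrite /= (@Ob_ext _ (Fam m)); first by apply: fob; lia.
  by move=> i hi; rewrite /upd ifN //; apply/eqP; lia.
Qed.

Lemma InvF m : Inv m (Fam m).
Proof. elim: m => [|m ih]; [exact: Inv0 | exact: InvS]. Qed.

Lemma Fam_stable m i : (i <= m)%N -> Fam m i = Fam i i.
Proof.
elim: m => [|m ih] hi; first by case: i hi.
rewrite leq_eqVlt in hi; case/orP: hi => [/eqP -> // | hi].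
rewrite /= /upd ifN; first exact: ih.
by apply/eqP; lia.
Qed.

Lemma main_exists : exists Ts : nat -> V -> g,
    Ts 1%N = T1 /\ formal_deformation br rhoL rhoR T Ts.
Proof.
exists (fun i => Fam i i); split; first by rewrite /= /upd.
rewrite /formal_deformation; split; first by move=> i; case: (InvF i).
split; first by [].
move=> n u v.
have e : Ob br rhoL rhoR (fun i => Fam i i) n u v = 0.
  rewrite (@Ob_ext _ (Fam n)); first by case: (InvF n) => _ _ _ _ h; apply: h.
  by move=> i hi; rewrite Fam_stable.
move: e; rewrite /Ob /Eb sumrB => /eqP; rewrite subr_eq0 => /eqP ->.
apply: eq_bigr => i _; congr (Fam i i _).
rewrite (eq_bigl (fun j : 'I_n.+1 => (j : nat) == (n - i)%N)).
  by rewrite (big_ord1_eq _ (fun j : nat => rhoL (Fam j j u) v + rhoR (Fam j j v) u)) ltnS leq_subr.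
by move=> j /=; apply/eqP/eqP; have := ltn_ord i; lia.
Qed.

End Main.

Unset Implicit Arguments.
Set Strict Implicit.

Theorem corollary3p27 (K : fieldType) (g V : lmodType K)
  (br : g -> g -> g) (rhoL rhoR : g -> V -> V) (T : V -> g) :
  leibniz_algebra br ->
  leibniz_rep br rhoL rhoR ->
  relative_RB br rhoL rhoR T ->
  H2_vanishes br rhoL rhoR T ->
  forall T1 : V -> g, linear T1 -> cocycle br rhoL rhoR T 1 (cochain1 T1) ->
  exists Ts : nat -> V -> g,
    Ts 1%N = T1 /\ formal_deformation br rhoL rhoR T Ts.
Proof.
move=> Hla Hrep HRB H2 T1 HT1 Hc.
exact: (main_exists Hla Hrep HRB H2 HT1 Hc).
Qed.
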